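(* Let $P = u_1;\ldots;u_k$ ($k\ge 1$) be any PGLD program whose basic instructions are of the form $f.m$ with $f\in\mathrm{Foci}$, $m\in\mathrm{Meth}$. Let $t_P$ be the molecular dynamics state reached from the initial state $t_{\mathrm{init}}$ by executing the PGA program $\mathrm{pgldmd}(P)$, i.e. by applying $\mathrm{eff}$ successively for the methods of its instructions in order. Then $$|P|_{\mathrm{PGLD}} = \tau_{\mathrm{tau}}\big(|I| /_{\mathsf{md}} \mathrm{MDS}_{t_P}\big).$$
   Context: Threads. Let $A$ be a set of basic actions, $\tau\notin A$. Threads are built from $\mathsf S$ (termination), $\mathsf D$ (deadlock) and postconditional composition $x\unlhd a\unrhd y$ for $a\in A\cup\{\tau\}$ (perform $a$, then continue as $x$ if the reply is true, as $y$ if false); $a\circ x$ abbreviates $x\unlhd a\unrhd x$, and $x\unlhd\tau\unrhd y=\tau\circ x$. Threads are taken in the projective limit model: projections are $\pi_0(x)=\mathsf D$, $\pi_{n+1}(\mathsf S)=\mathsf S$, $\pi_{n+1}(\mathsf D)=\mathsf D$, $\pi_{n+1}(x\unlhd a\unrhd y)=\pi_n(x)\unlhd a\unrhd\pi_n(y)$; two threads are equal iff all their projections are equal; every guarded system of recursion equations has a unique solution. PGA. A PGA program is a finite, or eventually periodic infinite, sequence $v_1v_2\ldots$ (written with $;$ and $Y^\omega=Y;Y;\ldots$) of primitive instructions: basic instruction $a$, positive test $+a$, negative test $-a$, forward jump $\#l$ ($l\in\mathbb N$), termination $!$. Its behaviour $|X|$ is $T_1$ where: $T_i=\mathsf D$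 if $i$ exceeds the length; if $v_i=a$ then $T_i=a\circ T_{i+1}$; if $v_i=+a$ then $T_i=T_{i+1}\unlhd a\unrhd T_{i+2}$; if $v_i=-a$ then $T_i=T_{i+2}\unlhd a\unrhd T_{i+1}$; if $v_i=\#l$ then $T_i=T_{i+l}$ for $l>0$ and $T_i=\mathsf D$ for $l=0$; if $v_i=!$ then $T_i=\mathsf S$; and $T_i=\mathsf D$ whenever the chain of jumps starting at position $i$ is infinite. PGLD. A PGLD program $u_1;\ldots;u_k$ consists of instructions $a$, $+a$, $-a$ (as in PGA) and absolute jumps $\#\#l$ ($l\in\mathbb N$). Its behaviour is $|P|_{\mathrm{PGLD}}=|(\psi_1(u_1);\ldots;\psi_k(u_k);!;!)^\omega|$ where $\psi_j(\#\#l)=\#(l-j)$ if $j\le l\le k$, $\psi_j(\#\#l)=\#(k+2-(j-l))$ if $0<l<j$, $\psi_j(\#\#l)=!$ if $l=0$ or $l>k$, and $\psi_j(u)=u$ for non-jump $u$. Molecular dynamics. Fix a finite set $\mathrm{Spot}$ of spots with a total order $\le$; finite disjoint sets $\mathrm{Foci}$ (foci) and $\mathrm{Meth}$ (methods) with $\mathrm{Foci},\mathrm{Meth}\subseteq\mathrm{Spot}$; a finite set $\mathrm{Field}$ containing distinct fields $\mathsf{stop},\mathsf{ajmp},\mathsf{focus},\mathsf{method},\mathsf{pos},\mathsf{neg}$; an infinite countable set $\mathrm{PAtom}$ of proto-atoms, $\bot\notin\mathrm{PAtom}$, with a bijection $\mathrm{proatom}:\mathbb N_{\ge1}\to\mathrm{PAtom}$.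 The basic actions are $f.m$ ($f\in\mathrm{Foci},m\in\mathrm{Meth}$) and $\mathsf{md}.m$ for the molecular dynamics methods $m$ below, where $\mathsf{md}$ is a focus name not in $\mathrm{Foci}$. A state is $\uparrow$ or a pair $\langle\sigma,\alpha\rangle$ with $\sigma:\mathrm{Spot}\to\mathrm{PAtom}\cup\{\bot\}$, $\alpha$ a map from a finite set $\mathrm{dom}(\alpha)\subseteq\mathrm{PAtom}$ (the atoms) assigning to each atom $a$ a map $\alpha(a)$ from a finite set of fields to $\mathrm{PAtom}\cup\{\bot\}$, with all values of $\sigma$ and of each $\alpha(a)$ in $\mathrm{dom}(\alpha)\cup\{\bot\}$. $t_{\mathrm{init}}$ is the state with $\mathrm{dom}(\alpha)=\emptyset$ (so $\sigma\equiv\bot$). For each method $m$ and state $t$ there is a new state $\mathrm{eff}(m,t)$ and a yield $\mathrm{yld}(m,t)\in\{T,F,M,B\}$; unless stated, the state is unchanged. In state $\langle\sigma,\alpha\rangle$ (with $s,s'\in\mathrm{Spot}$, $v\in\mathrm{Field}$; ''$v$ is a field of $s$'' means $\sigma(s)\ne\bot$ and $v\in\mathrm{dom}(\alpha(\sigma(s)))$): $\mathsf{create}(s)$: with $a=\mathrm{proatom}(n+1)$, $n=\max\{n' : \mathrm{proatom}(n')\in\mathrm{dom}(\alpha)\}$ ($\max\emptyset=0$), set $\sigma(s):=a$, add atom $a$ with no fields; yield $T$. $\mathsf{setspot}(s,s')$: $\sigma(s):=\sigma(s')$; $T$. $\mathsf{clearspot}(s)$: $\sigma(s):=\bot$; $T$.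 $\mathsf{equal}(s,s')$: yield $T$ iff $\sigma(s)=\sigma(s')$, else $F$. $\mathsf{undef}(s)$: $T$ iff $\sigma(s)=\bot$, else $F$. $\mathsf{addfield}(s,v)$: if $\sigma(s)\ne\bot$ and $v$ is not a field of $s$, add field $v$ with content $\bot$ to atom $\sigma(s)$, yield $T$; else $F$. $\mathsf{rmvfield}(s,v)$: if $v$ is a field of $s$, remove it, $T$; else $F$. $\mathsf{hasfield}(s,v)$: $T$ iff $v$ is a field of $s$, else $F$. $\mathsf{setfield}(s,v,s')$: if $v$ is a field of $s$, set $\alpha(\sigma(s))(v):=\sigma(s')$, $T$; else $F$. $\mathsf{getfield}(s,s',v)$: if $v$ is a field of $s'$, set $\sigma(s):=\alpha(\sigma(s'))(v)$, $T$; else $F$. $\mathsf{genact}(s,s')$: if $\sigma(s)\ne\bot$, $\sigma(s')\ne\bot$, some $f'\in\mathrm{Foci}$ has $\sigma(f')=\sigma(s)$ and some $m'\in\mathrm{Meth}$ has $\sigma(m')=\sigma(s')$: state unchanged, yield $M$, and the action is transformed into $f.m$ with $f$ the $\le$-least such $f'$ and $m$ the $\le$-least such $m'$; otherwise yield $B$ and new state $\uparrow$. In state $\uparrow$ every method yields $B$ and leads to $\uparrow$. $\mathrm{MDS}_t$ denotes the service in state $t$. Use operator. For a thread $p$ and state $t$, $p/_{\mathsf{md}}\mathrm{MDS}_t$ is determined by: $\mathsf S/\ldots=\mathsf S$; $\mathsf D/\ldots=\mathsf D$; $(\tau\circ x)/_{\mathsf{md}}\mathrm{MDS}_t=\tau\circ(x/_{\mathsf{md}}\mathrm{MDS}_t)$;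 $(x\unlhd g.m\unrhd y)/_{\mathsf{md}}\mathrm{MDS}_t=(x/_{\mathsf{md}}\mathrm{MDS}_t)\unlhd g.m\unrhd(y/_{\mathsf{md}}\mathrm{MDS}_t)$ for $g\ne\mathsf{md}$; for $a=\mathsf{md}.m$ and $t'=\mathrm{eff}(m,t)$: $(x\unlhd a\unrhd y)/_{\mathsf{md}}\mathrm{MDS}_t$ equals $\tau\circ(x/_{\mathsf{md}}\mathrm{MDS}_{t'})$ if the yield is $T$, $\tau\circ(y/_{\mathsf{md}}\mathrm{MDS}_{t'})$ if $F$, $(x\unlhd f.m'\unrhd y)/_{\mathsf{md}}\mathrm{MDS}_{t'}$ if $M$ with transformed action $f.m'$, and $\mathsf D$ if $B$; for infinite $p$, $\pi_n(p/_{\mathsf{md}}H)=\pi_n(\pi_n(p)/_{\mathsf{md}}H)$. Abstraction. $\tau_{\mathrm{tau}}(p)=\mathsf D$ if $p$ starts with infinitely many $\tau$'s; otherwise $\tau_{\mathrm{tau}}(\mathsf S)=\mathsf S$, $\tau_{\mathrm{tau}}(\mathsf D)=\mathsf D$, $\tau_{\mathrm{tau}}(\tau\circ x)=\tau_{\mathrm{tau}}(x)$, $\tau_{\mathrm{tau}}(x\unlhd a\unrhd y)=\tau_{\mathrm{tau}}(x)\unlhd a\unrhd\tau_{\mathrm{tau}}(y)$ for $a\ne\tau$. Representation. Fix pairwise distinct spots $s,u,v,s_1,\ldots,s_{k+2}\in\mathrm{Spot}\setminus(\mathrm{Foci}\cup\mathrm{Meth})$. In the PGA programs below every instruction has focus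 $\mathsf{md}$ (omitted). For $P=u_1;\ldots;u_k$ with distinct occurring foci $f_1,\ldots,f_n$ and distinct occurring methods $m_1,\ldots,m_{n'}$: $\mathrm{pgldmd}(P)=\mathsf{create}(f_1);\ldots;\mathsf{create}(f_n);\mathsf{create}(m_1);\ldots;\mathsf{create}(m_{n'});\mathsf{create}(s_1);\ldots;\mathsf{create}(s_{k+2});\rho_1(u_1);\ldots;\rho_k(u_k);\mathsf{addfield}(s_{k+1},\mathsf{stop});\mathsf{addfield}(s_{k+2},\mathsf{stop});\mathsf{setspot}(s,s_1);!$, where for $u_j\in\{f.m,+f.m,-f.m\}$, $\rho_j(u_j)=\mathsf{addfield}(s_j,\mathsf{focus});\mathsf{addfield}(s_j,\mathsf{method});\mathsf{addfield}(s_j,\mathsf{pos});\mathsf{addfield}(s_j,\mathsf{neg});\mathsf{setfield}(s_j,\mathsf{focus},f);\mathsf{setfield}(s_j,\mathsf{method},m);\mathsf{setfield}(s_j,\mathsf{pos},s_{p});\mathsf{setfield}(s_j,\mathsf{neg},s_{q})$ with $(p,q)=(j+1,j+1)$ for $f.m$, $(j+1,j+2)$ for $+f.m$, $(j+2,j+1)$ for $-f.m$; $\rho_j(\#\#l)=\mathsf{addfield}(s_j,\mathsf{ajmp});\mathsf{setfield}(s_j,\mathsf{ajmp},s_l)$ if $1\le l\le k$, and $\rho_j(\#\#l)=\mathsf{addfield}(s_j,\mathsf{stop})$ otherwise. Interpreter. $I=(+\mathsf{hasfield}(s,\mathsf{stop});!;+\mathsf{hasfield}(s,\mathsf{ajmp});\#9;\mathsf{getfield}(u,s,\mathsf{focus});\mathsf{getfield}(v,s,\mathsf{method});+\mathsf{genact}(u,v);\#3;\mathsf{getfield}(s,s,\mathsf{neg});\#4;\mathsf{getfield}(s,s,\mathsf{pos});\#2;\mathsf{getfield}(s,s,\mathsf{ajmp}))^\omega$,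 all instructions with focus $\mathsf{md}$. *)

(* Defs.v *)
From HB Require Import structures.
From mathcomp Require Import all_boot all_order.
From mathcomp Require Import finmap.
From Stdlib Require Import ClassicalEpsilon.

Set Implicit Arguments.
Unset Strict Implicit.
Unset Printing Implicit Defensive.


(* A thread over basic actions A is represented coinductively; tau is  *)
(* a separate constructor since  x <| tau |> y = tau o x.              *)
(* Equality of threads = equality of all projections.                  *)

CoInductive thread (A : Type) : Type :=
| TS : thread A
| TD : thread A
| TTau : thread A -> thread A
| TPost : thread A -> A -> thread A -> thread A.
Arguments TS {A}. Arguments TD {A}.

Inductive fthread (A : Type) : Type :=
| FS : fthread A
| FD : fthread A
| FTau : fthread A -> fthread A
| FPost : fthread A -> A -> fthread A -> fthread A.
Arguments FS {A}. Arguments FD {A}.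

Fixpoint proj (A : Type) (n : nat) (p : thread A) : fthread A :=
  match n with
  | 0 => FD
  | n'.+1 =>
    match p with
    | TS => FS
    | TD => FD
    | TTau x => FTau (proj n' x)
    | TPost x a y => FPost (proj n' x) a (proj n' y)
    end
  end.

Definition thr_eq (A : Type) (p q : thread A) : Prop :=
  forall n, proj n p = proj n q.

Definition is_tau (A : Type) (p : thread A) : bool :=
  if p is TTau _ then true else false.

Fixpoint tau_strip (A : Type) (n : nat) (p : thread A) : thread A :=
  match n with
  | 0 => p
  | n'.+1 => if p is TTau x then tau_strip n' x else p
  end.

Definition finite_tau_prefix (A : Type) (p : thread A) : Prop :=
  exists n, ~~ is_tau (tau_strip n p).

Definition strip_all (A : Type) (p : thread A) : option (thread A) :=
  match excluded_middle_informative (finite_tau_prefix p) with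
  | left H => Some (tau_strip (proj1_sig (constructive_indefinite_description _ H)) p)
  | right _ => None
  end.

CoFixpoint tau_tau (A : Type) (p : thread A) : thread A :=
  match strip_all p with
  | None => TD
  | Some q =>
    match q with
    | TS => TS
    | TD => TD
    | TTau _ => TD (* impossible *)
    | TPost x a y => TPost (tau_tau x) a (tau_tau y)
    end
  end.

(* PGA: instruction sequences  prefix ; period^omega                    *)
(* (period = [::] means the finite program prefix).                     *)

Inductive pga_instr (A : Type) : Type :=
| IBas : A -> pga_instr A
| IPos : A -> pga_instr A
| INeg : A -> pga_instr A
| IJump : nat -> pga_instr A
| ITerm : pga_instr A.
Arguments ITerm {A}. Arguments IJump {A}.

Record pga (A : Type) := PGA { pga_prefix : seq (pga_instr A);
                               pga_period : seq (pga_instr A) }.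

Definition omega (A : Type) (Y : seq (pga_instr A)) : pga A := PGA [::] Y.

(* instruction at (1-based) position i, None if beyond the length *)
Definition instr_at (A : Type) (X : pga A) (i : nat) : option (pga_instr A) :=
  if i == 0 then None else
  let k := i.-1 in
  if k < size (pga_prefix X) then onth (pga_prefix X) k
  else if pga_period X is [::] then None
  else onth (pga_period X) ((k - size (pga_prefix X)) %% size (pga_period X)).

Definition jnext (A : Type) (X : pga A) (i : nat) : option nat :=
  match instr_at X i with
  | Some (IJump l) => if 0 < l then Some (i + l) else None
  | _ => None
  end.

Fixpoint jiter (A : Type) (X : pga A) (n i : nat) : nat :=
  match n with
  | 0 => i
  | n'.+1 => if jnext X i is Some j then jiter X n' j else i
  end.

Definition chain_ends_at (A : Type) (X : pga A) (i j : nat) : Prop :=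
  exists n, jiter X n i = j /\ jnext X j = None.

Definition chain_end (A : Type) (X : pga A) (i : nat) : option nat :=
  match excluded_middle_informative (exists j, chain_ends_at X i j) with
  | left H => Some (proj1_sig (constructive_indefinite_description _ H))
  | right _ => None
  end.

CoFixpoint pga_T (A : Type) (X : pga A) (i : nat) : thread A :=
  match chain_end X i with
  | None => TD
  | Some j =>
    match instr_at X j with
    | None => TD
    | Some (IBas a) => TPost (pga_T X j.+1) a (pga_T X j.+1)
    | Some (IPos a) => TPost (pga_T X j.+1) a (pga_T X j.+2)
    | Some (INeg a) => TPost (pga_T X j.+2) a (pga_T X j.+1)
    | Some (IJump _) => TD (* only #0 can occur here *)
    | Some ITerm => TS
    end
  end.

Definition pga_beh (A : Type) (X : pga A) : thread A := pga_T X 1.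

Section MD.
Local Open Scope fset_scope.
Local Open Scope fmap_scope.
Context {d : Order.disp_t} {Spot : finOrderType d} {Field : finType}
        {PAtom : choiceType}.

Inductive mdm : Type :=
| create of Spot
| setspot of Spot & Spot
| clearspot of Spot
| equal of Spot & Spot
| undef of Spot
| addfield of Spot & Field
| rmvfield of Spot & Field
| hasfield of Spot & Field
| setfield of Spot & Field & Spot
| getfield of Spot & Spot & Field
| genact of Spot & Spot.

(* basic actions: f.m (f, m spots naming a focus and a method), and md.m *)
Inductive bact : Type :=
| Bas of Spot & Spot
| MD of mdm.

(* a proper state <sigma, alpha>; alpha is a finite map from atoms to
   finite maps from fields to PAtom + bot (None = bot) *)
Record mdstate := MDState {
  sigma : Spot -> option PAtom;
  alpha : {fmap PAtom -> {fmap Field -> option PAtom}} }.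

(* a state: None = the error state "up", Some st = <sigma, alpha> *)
Definition mstate := option mdstate.

Inductive yield : Type := YT | YF | YM of Spot & Spot | YB.

Definition upd_sigma (sg : Spot -> option PAtom) (x : Spot) (c : option PAtom) :=
  fun y => if y == x then c else sg y.

Definition fields_of (st : mdstate) (x : Spot) : option {fmap Field -> option PAtom} :=
  match sigma st x with
  | None => None
  | Some a => Some (odflt [fmap] (alpha st).[? a])
  end.

Definition is_field (st : mdstate) (x : Spot) (w : Field) : bool :=
  if fields_of st x is Some fl then w \in domf fl else false.

Variables (Foci Meth : {set Spot}) (proatom : nat -> PAtom) (atomno : PAtom -> nat).

Definition md_step (m : mdm) (t : mstate) : mstate * yield :=
  match t with
  | None => (None, YB)
  | Some st =>
    let sg := sigma st in let al := alpha st in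
    match m with
    | create x =>
        let n := \max_(b <- domf al) atomno b in
        let a := proatom n.+1 in
        (Some (MDState (upd_sigma sg x (Some a)) al.[a <- [fmap]]), YT)
    | setspot x x' => (Some (MDState (upd_sigma sg x (sg x')) al), YT)
    | clearspot x => (Some (MDState (upd_sigma sg x None) al), YT)
    | equal x x' => (t, if sg x == sg x' then YT else YF)
    | undef x => (t, if sg x == None then YT else YF)
    | addfield x w =>
        match sg x with
        | Some a =>
          if is_field st x w then (t, YF)
          else (Some (MDState sg al.[a <- (odflt [fmap] al.[? a]).[w <- None]]), YT)
        | None => (t, YF)
        end
    | rmvfield x w =>
        match sg x with
        | Some a =>
          if is_field st x w then
            (Some (MDState sg al.[a <- (odflt [fmap] al.[? a]).[~ w]]), YT)
          else (t, YF)
        | None => (t, YF)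
        end
    | hasfield x w => (t, if is_field st x w then YT else YF)
    | setfield x w x' =>
        match sg x with
        | Some a =>
          if is_field st x w then
            (Some (MDState sg al.[a <- (odflt [fmap] al.[? a]).[w <- sg x']]), YT)
          else (t, YF)
        | None => (t, YF)
        end
    | getfield x x' w =>
        match fields_of st x' with
        | Some fl =>
          if fl.[? w] is Some c then (Some (MDState (upd_sigma sg x c) al), YT)
          else (t, YF)
        | None => (t, YF)
        end
    | genact x x' =>
        if (sg x != None) && (sg x' != None) then
          match [pick f | [&& f \in Foci, sg f == sg x &
                     [forall g, ((g \in Foci) && (sg g == sg x)) ==> (f <= g)%O]]],
                [pick m' | [&& m' \in Meth, sg m' == sg x' &
                     [forall g, ((g \in Meth) && (sg g == sg x')) ==> (m' <= g)%O]]] with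
          | Some f, Some m' => (t, YM f m')
          | _, _ => (None, YB)
          end
        else (None, YB)
    end
  end.

Definition eff (m : mdm) (t : mstate) : mstate := (md_step m t).1.
Definition yld (m : mdm) (t : mstate) : yield := (md_step m t).2.

CoFixpoint use (p : thread bact) (t : mstate) : thread bact :=
  match p with
  | TS => TS
  | TD => TD
  | TTau x => TTau (use x t)
  | TPost x (Bas f m) y => TPost (use x t) (Bas f m) (use y t)
  | TPost x (MD m) y =>
      match md_step m t with
      | (t', YT) => TTau (use x t')
      | (t', YF) => TTau (use y t')
      | (t', YM f m') => TPost (use x t') (Bas f m') (use y t')
      | (_, YB) => TD
      end
  end.

Definition t_init : mstate := Some (MDState (fun _ => None) [fmap]).

Fixpoint exec_md (X : seq (pga_instr bact)) (t : mstate) : mstate :=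
  match X with
  | [::] => t
  | IBas (MD m) :: X' => exec_md X' (eff m t)
  | _ :: X' => exec_md X' t
  end.

End MD.

Section PGLD.
Context {d : Order.disp_t} {Spot : finOrderType d} {Field : finType}.

Local Notation bact := (@bact d Spot Field).

Inductive pgld_instr : Type :=
| LBas of Spot & Spot
| LPos of Spot & Spot
| LNeg of Spot & Spot
| LAJump of nat.

Definition psi (k j : nat) (w : pgld_instr) : pga_instr bact :=
  match w with
  | LBas f m => IBas (Bas f m)
  | LPos f m => IPos (Bas f m)
  | LNeg f m => INeg (Bas f m)
  | LAJump l =>
      if (l == 0) || (k < l) then ITerm
      else if j <= l then IJump (l - j)
      else IJump (k + 2 - (j - l))
  end.

Definition pgld_beh (P : seq pgld_instr) : thread bact :=
  pga_beh (omega ([seq psi (size P) j.+1 (nth (LAJump 0) P j) | j <- iota 0 (size P)]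
                  ++ [:: ITerm; ITerm])).

Definition instr_fm (w : pgld_instr) : option (Spot * Spot) :=
  match w with
  | LBas f m | LPos f m | LNeg f m => Some (f, m)
  | LAJump _ => None
  end.

(* foci / methods occurring in P (with repetitions) *)
Definition occ_foci (P : seq pgld_instr) : seq Spot := pmap (omap fst \o instr_fm) P.
Definition occ_meths (P : seq pgld_instr) : seq Spot := pmap (omap snd \o instr_fm) P.

Variables (fstop fajmp ffocus fmethod fpos fneg : Field).
Variables (s : Spot) (sj : nat -> Spot).

Definition mdi (m : @mdm d Spot Field) : pga_instr bact := IBas (MD m).

Definition rho (k j : nat) (w : pgld_instr) : seq (pga_instr bact) :=
  let rf f m p q :=
    [:: mdi (addfield (sj j) ffocus); mdi (addfield (sj j) fmethod);
        mdi (addfield (sj j) fpos); mdi (addfield (sj j) fneg);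
        mdi (setfield (sj j) ffocus f); mdi (setfield (sj j) fmethod m);
        mdi (setfield (sj j) fpos (sj p)); mdi (setfield (sj j) fneg (sj q))] in
  match w with
  | LBas f m => rf f m j.+1 j.+1
  | LPos f m => rf f m j.+1 j.+2
  | LNeg f m => rf f m j.+2 j.+1
  | LAJump l =>
      if (1 <= l) && (l <= k) then
        [:: mdi (addfield (sj j) fajmp); mdi (setfield (sj j) fajmp (sj l))]
      else [:: mdi (addfield (sj j) fstop)]
  end.

(* pgldmd(P), given enumerations fs, ms of the distinct occurring foci
   and methods *)
Definition pgldmd (fs ms : seq Spot) (P : seq pgld_instr) : seq (pga_instr bact) :=
  let k := size P in
  [seq mdi (create f) | f <- fs] ++ [seq mdi (create m) | m <- ms]
  ++ [seq mdi (create (sj j)) | j <- iota 1 (k + 2)]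
  ++ flatten [seq rho k j.+1 (nth (LAJump 0) P j) | j <- iota 0 k]
  ++ [:: mdi (addfield (sj k.+1) fstop); mdi (addfield (sj k.+2) fstop);
         mdi (setspot s (sj 1)); ITerm].

End PGLD.

Section Interp.
Context {d : Order.disp_t} {Spot : finOrderType d} {Field : finType}.
Variables (fstop fajmp ffocus fmethod fpos fneg : Field) (s u v : Spot).

Definition interp_body : seq (pga_instr (@bact d Spot Field)) :=
  [:: IPos (MD (hasfield s fstop)); ITerm; IPos (MD (hasfield s fajmp)); IJump 9;
      IBas (MD (getfield u s ffocus)); IBas (MD (getfield v s fmethod));
      IPos (MD (genact u v)); IJump 3; IBas (MD (getfield s s fneg)); IJump 4;
      IBas (MD (getfield s s fpos)); IJump 2; IBas (MD (getfield s s fajmp))].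

Definition interp : pga (@bact d Spot Field) := omega interp_body.
End Interp.

(* Main.v *)
Require Import Defs.
From HB Require Import structures.
From mathcomp Require Import all_boot all_order.
From mathcomp Require Import finmap.
From Stdlib Require Import ClassicalEpsilon Classical.
From mathcomp Require Import zify.
Set Implicit Arguments.
Unset Strict Implicit.
Unset Printing Implicit Defensive.

Definition frob (A : Type) (p : thread A) : thread A :=
  match p with TS => TS | TD => TD | TTau x => TTau x | TPost x a y => TPost x a y end.
Lemma frob_eq (A : Type) (p : thread A) : p = frob p.
Proof. by case: p. Qed.

Lemma tau_strip_nontau (A : Type) n (p : thread A) : ~~ is_tau p -> tau_strip n p = p.
Proof. by case: n => //= n; case: p. Qed.

Lemma tau_strip_uniq (A : Type) n m (p : thread A) :
  ~~ is_tau (tau_strip n p) -> ~~ is_tau (tau_strip m p) -> tau_strip n p = tau_strip m p.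
Proof.
elim: n m p => [|n IH] m p /=.
  by move=> H _; rewrite tau_strip_nontau.
case: p => [| |x|x a y] //=; try by move=> H _; rewrite tau_strip_nontau.
case: m => [|m] //= H1 H2; exact: IH.
Qed.

Lemma strip_all_tau (A : Type) (p : thread A) : strip_all (TTau p) = strip_all p.
Proof.
rewrite /strip_all.
case: excluded_middle_informative => H1; case: excluded_middle_informative => H2 //.
- case: constructive_indefinite_description => n1 Hn1;
  case: constructive_indefinite_description => n2 Hn2 /=.
  case: n1 Hn1 => [|n1] //= Hn1; congr Some; exact: tau_strip_uniq.
- exfalso; apply: H2; case: H1 => [[|n] Hn] //; by exists n.
- exfalso; apply: H1; case: H2 => n Hn; by exists n.+1.
Qed.

Lemma strip_all_nontau (A : Type) (p : thread A) : ~~ is_tau p -> strip_all p = Some p.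
Proof.
move=> Hp; rewrite /strip_all; case: excluded_middle_informative => H.
  case: constructive_indefinite_description => n Hn /=; by rewrite tau_strip_nontau.
by exfalso; apply: H; exists 0.
Qed.

Lemma tau_tau_unfold (A : Type) (p : thread A) : tau_tau p =
  match strip_all p with
  | None => TD
  | Some q => match q with
    | TS => TS | TD => TD | TTau _ => TD
    | TPost x a y => TPost (tau_tau x) a (tau_tau y) end end.
Proof. rewrite [LHS]frob_eq /=; case: strip_all => [[]|] //. Qed.

Lemma tau_tau_tau (A : Type) (p : thread A) : tau_tau (TTau p) = tau_tau p.
Proof. by rewrite !tau_tau_unfold strip_all_tau. Qed.
Lemma tau_tau_S (A : Type) : tau_tau (@TS A) = TS.
Proof. by rewrite tau_tau_unfold strip_all_nontau. Qed.
Lemma tau_tau_D (A : Type) : tau_tau (@TD A) = TD.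
Proof. by rewrite tau_tau_unfold strip_all_nontau. Qed.
Lemma tau_tau_post (A : Type) x a (y : thread A) :
  tau_tau (TPost x a y) = TPost (tau_tau x) a (tau_tau y).
Proof. by rewrite tau_tau_unfold strip_all_nontau. Qed.
Lemma tau_tau_inf (A : Type) (p : thread A) :
  (forall n, is_tau (tau_strip n p)) -> tau_tau p = TD.
Proof.
move=> H; rewrite tau_tau_unfold /strip_all; case: excluded_middle_informative => [E|//].
by exfalso; case: E => n; rewrite H.
Qed.

Section Chains.
Variables (A : Type) (X : pga A).

Lemma jiter_fix n i : jnext X i = None -> jiter X n i = i.
Proof. by case: n => //= n ->. Qed.

Lemma jiterD n m i : jiter X (n + m) i = jiter X m (jiter X n i).
Proof.
elim: n i => [|n IH] i //=.
case E: (jnext X i) => [j|]; first exact: IH.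
by rewrite jiter_fix.
Qed.

Lemma cea_uniq i j1 j2 : chain_ends_at X i j1 -> chain_ends_at X i j2 -> j1 = j2.
Proof.
move=> [n1 [E1 N1]] [n2 [E2 N2]].
wlog le12 : n1 n2 j1 j2 E1 N1 E2 N2 / n1 <= n2.
  move=> W; case: (leqP n1 n2) => h; first exact: (W n1 n2).
  by apply/esym/(W n2 n1) => //; apply: ltnW.
by rewrite -E2 -(subnKC le12) jiterD E1 jiter_fix.
Qed.

Lemma chain_end_none i : jnext X i = None -> chain_end X i = Some i.
Proof.
move=> H; rewrite /chain_end; case: excluded_middle_informative => [E|E].
  case: constructive_indefinite_description => j Hj /=; congr Some.
  by apply: (cea_uniq Hj); exists 0.
by exfalso; apply: E; exists i, 0.
Qed.

Lemma cea_step i i' j : jnext X i = Some i' -> chain_ends_at X i j <-> chain_ends_at X i' j.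
Proof.
move=> H; split.
  case=> [[|n] [E N]] /=; first by move: N; rewrite -E H.
  by move: E; rewrite /= H => E; exists n.
by case=> n [E N]; exists n.+1 => /=; rewrite H.
Qed.

Lemma chain_end_step i i' : jnext X i = Some i' -> chain_end X i = chain_end X i'.
Proof.
move=> H; rewrite /chain_end.
case: excluded_middle_informative => H1; case: excluded_middle_informative => H2 //.
- case: constructive_indefinite_description => j1 Hj1;
  case: constructive_indefinite_description => j2 Hj2 /=.
  by congr Some; apply: (cea_uniq Hj1); apply/(cea_step _ H).
- by exfalso; apply: H2; case: H1 => j /(cea_step _ H) ?; exists j.
- by exfalso; apply: H1; case: H2 => j /(cea_step _ H) ?; exists j.
Qed.

Lemma pga_T_unfold i : pga_T X i =
  match chain_end X i with
  | None => TD
  | Some j =>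
    match instr_at X j with
    | None => TD
    | Some (IBas a) => TPost (pga_T X j.+1) a (pga_T X j.+1)
    | Some (IPos a) => TPost (pga_T X j.+1) a (pga_T X j.+2)
    | Some (INeg a) => TPost (pga_T X j.+2) a (pga_T X j.+1)
    | Some (IJump _) => TD
    | Some ITerm => TS
    end
  end.
Proof. rewrite [LHS]frob_eq /=; case: chain_end => [j|] //; case: instr_at => [[]|] //. Qed.

Lemma jnext_nojump i : (forall l, instr_at X i <> Some (IJump l)) -> jnext X i = None.
Proof. by rewrite /jnext; case: instr_at => [[]|] // l H; case: (H l). Qed.

Lemma pga_T_bas i a : instr_at X i = Some (IBas a) ->
  pga_T X i = TPost (pga_T X i.+1) a (pga_T X i.+1).
Proof. move=> H; rewrite pga_T_unfold chain_end_none ?H //; by apply: jnext_nojump => l; rewrite H. Qed.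
Lemma pga_T_pos i a : instr_at X i = Some (IPos a) ->
  pga_T X i = TPost (pga_T X i.+1) a (pga_T X i.+2).
Proof. move=> H; rewrite pga_T_unfold chain_end_none ?H //; by apply: jnext_nojump => l; rewrite H. Qed.
Lemma pga_T_neg i a : instr_at X i = Some (INeg a) ->
  pga_T X i = TPost (pga_T X i.+2) a (pga_T X i.+1).
Proof. move=> H; rewrite pga_T_unfold chain_end_none ?H //; by apply: jnext_nojump => l; rewrite H. Qed.
Lemma pga_T_term i : instr_at X i = Some ITerm -> pga_T X i = TS.
Proof. move=> H; rewrite pga_T_unfold chain_end_none ?H //; by apply: jnext_nojump => l; rewrite H. Qed.
Lemma pga_T_jump i l : instr_at X i = Some (IJump l) -> 0 < l -> pga_T X i = pga_T X (i + l).
Proof.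
move=> H l0; rewrite !pga_T_unfold (@chain_end_step i (i + l)) //.
by rewrite /jnext H l0.
Qed.
Lemma pga_T_jump0 i : instr_at X i = Some (IJump 0) -> pga_T X i = TD.
Proof. by move=> H; rewrite pga_T_unfold chain_end_none ?H // /jnext H. Qed.
End Chains.

Lemma instr_omega (A : Type) (Y : seq (pga_instr A)) r c :
  0 < r <= size Y -> instr_at (omega Y) (r + size Y * c) = onth Y r.-1.
Proof.
case/andP=> r0 rY; rewrite /instr_at /=.
have -> : (r + size Y * c == 0) = false by case: r r0 {rY}.
case: Y rY => [|y Y] rY; first by case: r r0 rY.
have -> : (r + (size Y).+1 * c).-1 - 0 = r.-1 + (size Y).+1 * c by lia.
rewrite addnC mulnC modnMDl modn_small //; rewrite /= in rY; lia.
Qed.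

Lemma chain_end_some (A : Type) (X : pga A) i e : chain_end X i = Some e -> chain_ends_at X i e.
Proof.
rewrite /chain_end; case: excluded_middle_informative => // H.
by case: constructive_indefinite_description => j Hj /= [<-].
Qed.


Section Setup.
Local Open Scope fset_scope.
Local Open Scope fmap_scope.
Variables (d : Order.disp_t) (Spot : finOrderType d) (Foci Meth : {set Spot})
  (Field : finType) (PAtom : choiceType) (proatom : nat -> PAtom) (atomno : PAtom -> nat).
Hypothesis Hpa : forall n, 0 < n -> atomno (proatom n) = n.

Local Notation mst := (@mstate d Spot Field PAtom).
Local Notation exec := (@exec_md d Spot Field PAtom Foci Meth proatom atomno).
Local Notation eff := (@eff d Spot Field PAtom Foci Meth proatom atomno).

Definition wf (sg : Spot -> option PAtom) (al : {fmap PAtom -> {fmap Field -> option PAtom}}) :=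
  forall x a, sg x = Some a -> a \in domf al.

Lemma exec_cat X Y t : exec (X ++ Y) t = exec Y (exec X t).
Proof. by elim: X t => [|[[|m]|m|m|l|] X IH] t //=. Qed.

Lemma fresh_atom (al : {fmap PAtom -> {fmap Field -> option PAtom}}) :
  proatom (\max_(b <- domf al) atomno b).+1 \notin domf al.
Proof.
apply/negP => H.
have := @leq_bigmax_seq _ (domf al : seq PAtom) xpredT atomno _ H erefl.
by rewrite Hpa // ltnn.
Qed.

Lemma creates xs sg al : uniq xs -> wf sg al ->
  exists sg' al', exec [seq mdi (create x) | x <- xs] (Some (MDState sg al)) = Some (MDState sg' al')
   /\ wf sg' al' /\ (forall y, y \notin xs -> sg' y = sg y)
   /\ (forall x, x \in xs -> exists b, sg' x = Some b /\ b \notin domf al /\ al'.[? b] = Some [fmap])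
   /\ (forall x1 x2, x1 \in xs -> x2 \in xs -> sg' x1 = sg' x2 -> x1 = x2)
   /\ (forall c, c \in domf al -> al'.[? c] = al.[? c]).
Proof.
elim: xs sg al => [|x xs IH] sg al /=.
  move=> _ W; exists sg, al; do 5 (split=> //).
case/andP=> xNxs Uxs W.
rewrite /Defs.eff /=; set a := proatom _.
have aN : a \notin domf al by apply: fresh_atom.
have W1 : wf (upd_sigma sg x (Some a)) al.[a <- [fmap]].
  move=> y b; rewrite /upd_sigma dom_setf !inE; case: eqP => _; first by case=> ->; rewrite eqxx.
  by move/W => ->; rewrite orbT.
have [sg' [al' [E [W' [Hout [Hin [Hinj Hold]]]]]]] := IH _ _ Uxs W1.
exists sg', al'; split; first exact: E.
split=> //; split.
  move=> y; rewrite inE negb_or => /andP [yx yxs]; rewrite Hout // /upd_sigma (negbTE yx) //.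
split.
  move=> y; rewrite inE => /orP [/eqP ->|yxs].
    exists a; rewrite Hout // /upd_sigma eqxx; split=> //; split=> //.
    by rewrite Hold ?fnd_set ?eqxx // dom_setf !inE eqxx.
  have [b [E1 [E2 E3]]] := Hin y yxs; exists b; split=> //; split=> //.
  by move: E2; rewrite dom_setf !inE negb_or => /andP [].
split.
  have Hx : sg' x = Some a by rewrite Hout // /upd_sigma eqxx.
  move=> x1 x2; rewrite !inE => /orP [/eqP ->|H1] /orP [/eqP ->|H2] //.
  - rewrite Hx; have [b [E1 [E2 _]]] := Hin x2 H2; rewrite E1 => -[ab].
    by move: E2; rewrite -ab dom_setf !inE eqxx.
  - rewrite Hx; have [b [E1 [E2 _]]] := Hin x1 H1; rewrite E1 => -[ab].
    by move: E2; rewrite ab dom_setf !inE eqxx.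
  - exact: Hinj.
move=> c cal; rewrite Hold; last by rewrite dom_setf !inE cal orbT.
rewrite fnd_set; case: eqP => // ca; by move: aN; rewrite -ca cal.
Qed.
End Setup.


Section Steps.
Local Open Scope fset_scope.
Local Open Scope fmap_scope.
Variables (d : Order.disp_t) (Spot : finOrderType d) (Foci Meth : {set Spot})
  (Field : finType) (PAtom : choiceType) (proatom : nat -> PAtom) (atomno : PAtom -> nat).
Local Notation exec := (@exec_md d Spot Field PAtom Foci Meth proatom atomno).
Local Notation eff := (@eff d Spot Field PAtom Foci Meth proatom atomno).
Implicit Types (sg : Spot -> option PAtom) (al : {fmap PAtom -> {fmap Field -> option PAtom}}).

Lemma addfield_step sg al x a w : sg x = Some a -> w \notin odflt [fmap] al.[? a] ->
  eff (addfield x w) (Some (MDState sg al)) = Some (MDState sg al.[a <- (odflt [fmap] al.[? a]).[w <- None]]).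
Proof. by move=> E H; rewrite /Defs.eff /= E /is_field /fields_of /= E (negbTE H). Qed.

Lemma setfield_step sg al x a w x' : sg x = Some a -> w \in odflt [fmap] al.[? a] ->
  eff (setfield x w x') (Some (MDState sg al)) = Some (MDState sg al.[a <- (odflt [fmap] al.[? a]).[w <- sg x']]).
Proof. by move=> E H; rewrite /Defs.eff /= E /is_field /fields_of /= E H. Qed.

Lemma setspot_step sg al x x' :
  eff (setspot x x') (Some (MDState sg al)) = Some (MDState (upd_sigma sg x (sg x')) al).
Proof. by []. Qed.

Variables (fstop fajmp ffocus fmethod fpos fneg : Field).
Hypothesis Hu : uniq [:: fstop; fajmp; ffocus; fmethod; fpos; fneg].

Lemma neqs_of : ((fstop == fajmp) = false) * ((fstop == ffocus) = false) * ((fstop == fmethod) = false) *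
  ((fstop == fpos) = false) * ((fstop == fneg) = false) * ((fajmp == ffocus) = false) *
  ((fajmp == fmethod) = false) * ((fajmp == fpos) = false) * ((fajmp == fneg) = false) *
  ((ffocus == fmethod) = false) * ((ffocus == fpos) = false) * ((ffocus == fneg) = false) *
  ((fmethod == fpos) = false) * ((fmethod == fneg) = false) * ((fpos == fneg) = false) *
  ((fajmp == fstop) = false) * ((ffocus == fstop) = false) * ((fmethod == fstop) = false) *
  ((fpos == fstop) = false) * ((fneg == fstop) = false) * ((ffocus == fajmp) = false) *
  ((fmethod == fajmp) = false) * ((fpos == fajmp) = false) * ((fneg == fajmp) = false) *
  ((fmethod == ffocus) = false) * ((fpos == ffocus) = false) * ((fneg == ffocus) = false) *
  ((fpos == fmethod) = false) * ((fneg == fmethod) = false) * ((fneg == fpos) = false).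
Proof.
repeat split; apply/negbTE/eqP => E; move: Hu; rewrite E /= !inE !eqxx ?orbT ?andbF //.
Qed.

Definition rfl (sg : Spot -> option PAtom) f m xp xq w : option (option PAtom) :=
  if w == ffocus then Some (sg f) else if w == fmethod then Some (sg m)
  else if w == fpos then Some (sg xp) else if w == fneg then Some (sg xq) else None.

Lemma rf_exec sg al x a f m xp xq :
  sg x = Some a -> al.[? a] = Some [fmap] ->
  exists al', exec [:: mdi (addfield x ffocus); mdi (addfield x fmethod);
        mdi (addfield x fpos); mdi (addfield x fneg);
        mdi (setfield x ffocus f); mdi (setfield x fmethod m);
        mdi (setfield x fpos xp); mdi (setfield x fneg xq)] (Some (MDState sg al))
     = Some (MDState sg al') /\
   (exists fl, al'.[? a] = Some fl /\ forall w, fl.[? w] = rfl sg f m xp xq w) /\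
   (forall b, b != a -> al'.[? b] = al.[? b]).
Proof.
move=> Ex Ea; have N := neqs_of.
rewrite /=.
rewrite (@addfield_step _ _ _ a) // ?Ea //.
rewrite (@addfield_step _ _ _ a) // ?fnd_set ?eqxx //= ?inE ?N //.
rewrite (@addfield_step _ _ _ a) // ?fnd_set ?eqxx //= ?inE ?N //.
rewrite (@addfield_step _ _ _ a) // ?fnd_set ?eqxx //= ?inE ?N //.
rewrite (@setfield_step _ _ _ a) // ?fnd_set ?eqxx //= ?inE ?N ?eqxx ?orbT //.
rewrite (@setfield_step _ _ _ a) // ?fnd_set ?eqxx //= ?inE ?N ?eqxx ?orbT //.
rewrite (@setfield_step _ _ _ a) // ?fnd_set ?eqxx //= ?inE ?N ?eqxx ?orbT //.
rewrite (@setfield_step _ _ _ a) // ?fnd_set ?eqxx //= ?inE ?N ?eqxx ?orbT //.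
eexists; split; first reflexivity.
split.
  eexists; split; first by rewrite fnd_set eqxx.
  move=> w; rewrite /rfl !fnd_set fnd_fmap0.
  case: (w =P ffocus) => [->|_]; first by rewrite ?N.
  case: (w =P fmethod) => [->|_]; first by rewrite ?N.
  case: (w =P fpos) => [->|_]; first by rewrite ?N.
  by case: (w =P fneg).
by move=> b bNa; rewrite !fnd_set (negbTE bNa).
Qed.

Lemma jmp_exec sg al x a x' :
  sg x = Some a -> al.[? a] = Some [fmap] ->
  exists al', exec [:: mdi (addfield x fajmp); mdi (setfield x fajmp x')] (Some (MDState sg al))
     = Some (MDState sg al') /\
   (exists fl, al'.[? a] = Some fl /\ forall w, fl.[? w] = (if w == fajmp then Some (sg x') else None)) /\
   (forall b, b != a -> al'.[? b] = al.[? b]).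
Proof.
move=> Ex Ea; rewrite /=.
rewrite (@addfield_step _ _ _ a) // ?Ea //.
rewrite (@setfield_step _ _ _ a) // ?fnd_set ?eqxx //= ?inE ?eqxx //.
eexists; split; first reflexivity.
split.
  eexists; split; first by rewrite fnd_set eqxx.
  by move=> w; rewrite !fnd_set fnd_fmap0; case: (w =P fajmp).
by move=> b bNa; rewrite !fnd_set (negbTE bNa).
Qed.

Lemma stop_exec sg al x a :
  sg x = Some a -> al.[? a] = Some [fmap] ->
  exists al', exec [:: mdi (addfield x fstop)] (Some (MDState sg al))
     = Some (MDState sg al') /\
   (exists fl, al'.[? a] = Some fl /\ forall w, fl.[? w] = (if w == fstop then Some None else None)) /\
   (forall b, b != a -> al'.[? b] = al.[? b]).
Proof.
move=> Ex Ea; rewrite /=.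
rewrite (@addfield_step _ _ _ a) // ?Ea //.
eexists; split; first reflexivity.
split.
  eexists; split; first by rewrite fnd_set eqxx.
  by move=> w; rewrite !fnd_set fnd_fmap0.
by move=> b bNa; rewrite !fnd_set (negbTE bNa).
Qed.
End Steps.


Section UseLemmas.
Variables (d : Order.disp_t) (Spot : finOrderType d) (Foci Meth : {set Spot})
  (Field : finType) (PAtom : choiceType) (proatom : nat -> PAtom) (atomno : PAtom -> nat).
Local Notation useM := (@use d Spot Field PAtom Foci Meth proatom atomno).
Local Notation md_stepM := (@md_step d Spot Field PAtom Foci Meth proatom atomno).

Lemma use_tau x t : useM (TTau x) t = TTau (useM x t).
Proof. by rewrite [LHS]frob_eq. Qed.
Lemma use_S t : useM TS t = TS.
Proof. by rewrite [LHS]frob_eq. Qed.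
Lemma use_bas x f m y t : useM (TPost x (Bas f m) y) t = TPost (useM x t) (Bas f m) (useM y t).
Proof. by rewrite [LHS]frob_eq. Qed.
Lemma use_md x m y t : useM (TPost x (MD m) y) t =
  match md_stepM m t with
  | (t', YT) => TTau (useM x t')
  | (t', YF) => TTau (useM y t')
  | (t', YM f m') => TPost (useM x t') (Bas f m') (useM y t')
  | (_, YB) => TD
  end.
Proof. rewrite [LHS]frob_eq /=; by case: md_step => ? []. Qed.
End UseLemmas.



Lemma uniq_map_inj (T1 T2 : eqType) (f : T1 -> T2) s x y :
  uniq (map f s) -> x \in s -> y \in s -> f x = f y -> x = y.
Proof.
elim: s => [|a s IH] //= /andP [fa U]; rewrite !inE => /orP [/eqP ->|xs] /orP [/eqP ->|ys] //.
- by move=> E; move: fa; rewrite E map_f.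
- by move=> E; move: fa; rewrite -E map_f.
- exact: IH.
Qed.

Ltac clia := repeat (match goal with H : ?T |- _ => lazymatch T with
  | is_true (leq _ _) => fail | is_true (_ && _) => fail | is_true (~~ _) => fail
  | @eq nat _ _ => fail | ~ _ => fail | nat => fail | _ => clear H end end); lia.

Section Main.
Local Open Scope fmap_scope.
Variables (d : Order.disp_t) (Spot : finOrderType d) (Foci Meth : {set Spot})
  (Field : finType) (fstop fajmp ffocus fmethod fpos fneg : Field)
  (PAtom : choiceType) (proatom : nat -> PAtom) (atomno : PAtom -> nat)
  (s u v : Spot) (sj : nat -> Spot)
  (P : seq (@pgld_instr d Spot)) (fs ms : seq Spot).
Hypothesis Hdisj : [disjoint Foci & Meth].
Hypothesis Hfu : uniq [:: fstop; fajmp; ffocus; fmethod; fpos; fneg].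
Hypothesis Hpa : forall n, 0 < n -> atomno (proatom n) = n.
Hypothesis Hk : 0 < size P.
Hypothesis Hall : all (fun w => if instr_fm w is Some (f, m) then (f \in Foci) && (m \in Meth) else true) P.
Hypothesis Hsu : uniq (s :: u :: v :: [seq sj j | j <- iota 1 (size P + 2)]).
Hypothesis Hsn : forall x, x \in s :: u :: v :: [seq sj j | j <- iota 1 (size P + 2)] ->
     (x \notin Foci) && (x \notin Meth).
Hypothesis Hfs : uniq fs.
Hypothesis Hfso : fs =i occ_foci P.
Hypothesis Hms : uniq ms.
Hypothesis Hmso : ms =i occ_meths P.

Local Notation k := (size P).
Local Notation K := (size P + 2).
Local Notation exec := (@exec_md d Spot Field PAtom Foci Meth proatom atomno).
Local Notation mdst := (@mdstate d Spot Field PAtom).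

Definition sjs := [seq sj j | j <- iota 1 K].
Definition xs := fs ++ ms ++ sjs.


Lemma pmap_nth (A : Type) (B : eqType) (f : A -> option B) L x a0 :
  x \in pmap f L <-> exists2 i, i < size L & f (nth a0 L i) = Some x.
Proof.
elim: L => [|a L IH] /=; first by split=> // [[]].
rewrite /oapp; case E: (f a) => [b|] /=.
  rewrite inE; split.
    case/orP => [/eqP ->|/IH [i Hi Ei]]; first by exists 0.
    by exists i.+1.
  case=> [[|i]] /= Hi Ei; first by move: Ei; rewrite E => -[->]; rewrite eqxx.
  by apply/orP; right; apply/IH; exists i.
split; first by case/IH => i Hi Ei; exists i.+1.
case=> [[|i]] /= Hi Ei; first by rewrite E in Ei.
by apply/IH; exists i.
Qed.

Lemma all_fm i f m : i < k -> instr_fm (nth (LAJump 0) P i) = Some (f, m) -> (f \in Foci) && (m \in Meth).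
Proof. by move=> Hi E; move/all_nthP: Hall => /(_ (LAJump 0) i Hi); rewrite E. Qed.

Lemma fs_foci x : x \in fs -> x \in Foci.
Proof.
rewrite Hfso /occ_foci (pmap_nth _ _ _ (LAJump 0)) => -[i Hi].
move=> /=; case E: (instr_fm (nth (LAJump 0) P i)) => [[f m]|] //= [<-].
by case/andP: (all_fm Hi E).
Qed.

Lemma ms_meth x : x \in ms -> x \in Meth.
Proof.
rewrite Hmso /occ_meths (pmap_nth _ _ _ (LAJump 0)) => -[i Hi].
move=> /=; case E: (instr_fm (nth (LAJump 0) P i)) => [[f m]|] //= [<-].
by case/andP: (all_fm Hi E).
Qed.

Lemma fm_in i f m : i < k -> instr_fm (nth (LAJump 0) P i) = Some (f, m) ->
  [/\ f \in fs, m \in ms, f \in Foci & m \in Meth].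
Proof.
move=> Hi E; have /andP [H1 H2] := all_fm Hi E; split=> //.
  by rewrite Hfso /occ_foci (pmap_nth _ _ _ (LAJump 0)); exists i => //=; rewrite E.
by rewrite Hmso /occ_meths (pmap_nth _ _ _ (LAJump 0)); exists i => //=; rewrite E.
Qed.

Lemma sjs_out x : x \in sjs -> (x \notin Foci) && (x \notin Meth).
Proof. by move=> H; apply: Hsn; rewrite !inE H !orbT. Qed.

Lemma uniq_xs : uniq xs.
Proof.
rewrite /xs !cat_uniq Hfs Hms /=.
have Us : uniq sjs by move: Hsu => /= /and4P [].
rewrite Us andbT; apply/andP; split.
  apply/hasPn => x; rewrite mem_cat => /orP [xm|xsj]; apply/negP => xf.
    have := fs_foci xf; have := ms_meth xm => H1 H2.
    by rewrite (disjointFr Hdisj H2) in H1.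
  by have := sjs_out xsj; rewrite (fs_foci xf).
apply/hasPn => x xsj; apply/negP => xm.
by have := sjs_out xsj; rewrite (ms_meth xm) andbF.
Qed.

Lemma sj_inj i j : 0 < i <= K -> 0 < j <= K -> sj i = sj j -> i = j.
Proof.
move=> Hi Hj; apply: (@uniq_map_inj _ _ sj (iota 1 K)).
- by move: Hsu => /= /and4P [].
- by rewrite mem_iota; clia.
- by rewrite mem_iota; clia.
Qed.

Lemma sj_xs j : 0 < j <= K -> sj j \in xs.
Proof. by move=> H; rewrite /xs !mem_cat /sjs map_f ?orbT // mem_iota; clia. Qed.

Definition spec (sg : Spot -> option PAtom) (j : nat) (w : Field) : option (option PAtom) :=
  if j <= k then
    match nth (LAJump 0) P j.-1 with
    | LBas f m => rfl ffocus fmethod fpos fneg sg f m (sj j.+1) (sj j.+1) w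
    | LPos f m => rfl ffocus fmethod fpos fneg sg f m (sj j.+1) (sj j.+2) w
    | LNeg f m => rfl ffocus fmethod fpos fneg sg f m (sj j.+2) (sj j.+1) w
    | LAJump l => if (1 <= l) && (l <= k) then (if w == fajmp then Some (sg (sj l)) else None)
                  else (if w == fstop then Some None else None)
    end
  else (if w == fstop then Some None else None).

Local Notation rhoP := (rho fstop fajmp ffocus fmethod fpos fneg sj).

Lemma rho_one sg (al : {fmap PAtom -> {fmap Field -> option PAtom}}) i a : i < k -> sg (sj i.+1) = Some a -> al.[? a] = Some [fmap] ->
  exists al', exec (rhoP k i.+1 (nth (LAJump 0) P i)) (Some (MDState sg al)) = Some (MDState sg al')
   /\ (exists fl, al'.[? a] = Some fl /\ forall w, fl.[? w] = spec sg i.+1 w)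
   /\ (forall b, b != a -> al'.[? b] = al.[? b]).
Proof.
move=> Hi Ex Ea; rewrite /spec Hi.
case: (nth (LAJump 0) P i) => [f m|f m|f m|l];
  try exact: (rf_exec Foci Meth proatom atomno Hfu f m _ _ Ex Ea).
rewrite /rho; case: ((1 <= l) && (l <= k)).
  exact: (jmp_exec Foci Meth proatom atomno fajmp _ Ex Ea).
exact: (stop_exec Foci Meth proatom atomno fstop Ex Ea).
Qed.

Lemma rho_loop sg (al : {fmap PAtom -> {fmap Field -> option PAtom}}) :
  (forall j, 0 < j <= K -> exists a, sg (sj j) = Some a /\ al.[? a] = Some [fmap]) ->
  (forall i j, 0 < i <= K -> 0 < j <= K -> sg (sj i) = sg (sj j) -> i = j) ->
  forall i, i <= k -> exists al',
    exec (flatten [seq rhoP k j.+1 (nth (LAJump 0) P j) | j <- iota 0 i]) (Some (MDState sg al))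
      = Some (MDState sg al') /\
    forall j, 0 < j <= K -> exists a, sg (sj j) = Some a /\
      (if j <= i then exists fl, al'.[? a] = Some fl /\ forall w, fl.[? w] = spec sg j w
       else al'.[? a] = Some [fmap]).
Proof.
move=> H0 Hinj; elim=> [|i IH] Hi.
  exists al; split=> // j Hj; have [a [E1 E2]] := H0 j Hj; exists a; split=> //.
  by have -> : (j <= 0) = false by clia.
have [al' [E' H']] := IH (ltnW Hi).
have [a [Ea Fa]] := H' i.+1 ltac:(clia).
rewrite ltnn in Fa.
have [al'' [E'' [F'' O'']]] := rho_one Hi Ea Fa.
exists al''; split.
  by rewrite -addn1 iotaD map_cat flatten_cat exec_cat E' /= cats0 E''.
move=> j Hj; have [b [Eb Fb]] := H' j Hj; exists b; split=> //.
case: (j =P i.+1) => [Ej|jn].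
  by subst j; rewrite leqnn; move: Eb; rewrite Ea => -[<-].
have bNa : b != a.
  apply/eqP => ba; apply: jn; apply: Hinj => //; first clia.
  by rewrite Eb Ea ba.
rewrite O'' //.
have -> : (j <= i.+1) = (j <= i) by apply/idP/idP => H; [ clia | clia ].
exact: Fb.
Qed.

Lemma setup : exists sg1 (alP : {fmap PAtom -> {fmap Field -> option PAtom}}),
  exec (pgldmd fstop fajmp ffocus fmethod fpos fneg s sj fs ms P) (@t_init d Spot Field PAtom)
    = Some (MDState (upd_sigma sg1 s (sg1 (sj 1))) alP)
  /\ (forall x, x \in xs -> exists b, sg1 x = Some b)
  /\ (forall x y, x \in xs -> sg1 y = sg1 x -> y = x)
  /\ (forall j, 0 < j <= K -> exists a fl, sg1 (sj j) = Some a /\ alP.[? a] = Some fl /\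
        forall w, fl.[? w] = spec sg1 j w).
Proof.
have W0 : wf (fun _ : Spot => None) ([fmap] : {fmap PAtom -> {fmap Field -> option PAtom}}) by [].
have [sg1 [al1 [E1 [W1 [Hout [Hin [Hinj Hold]]]]]]] := creates Foci Meth Hpa uniq_xs W0.
have Hin' : forall x, x \in xs -> exists b, sg1 x = Some b /\ al1.[? b] = Some [fmap].
  by move=> x /Hin [b [? [_ ?]]]; exists b.
have Hinj' : forall x y, x \in xs -> sg1 y = sg1 x -> y = x.
  move=> x y xX E; case: (boolP (y \in xs)) => yX; first exact: Hinj.
  by have [b [Eb _]] := Hin' x xX; move: E; rewrite Hout // Eb.
have H0 : forall j, 0 < j <= K -> exists a, sg1 (sj j) = Some a /\ al1.[? a] = Some [fmap].
  by move=> j /sj_xs /Hin'.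
have Hsinj : forall i j, 0 < i <= K -> 0 < j <= K -> sg1 (sj i) = sg1 (sj j) -> i = j.
  by move=> i j Hi Hj E; apply: sj_inj => //; apply: Hinj' E; apply: sj_xs.
have [alR [ER HR]] := rho_loop H0 Hsinj (leqnn k).
have [a1 [Ea1 Fa1]] := HR k.+1 ltac:(clia).
have [a2 [Ea2 Fa2]] := HR k.+2 ltac:(clia).
rewrite ltnn in Fa1; rewrite (_ : (k.+2 <= k) = false) in Fa2; last by clia.
have a21 : a2 != a1.
  apply/eqP => E; suff : k.+2 = k.+1 by clia.
  by apply: Hsinj; [clia|clia|rewrite Ea1 Ea2 E].
set al2 := alR.[a1 <- [fmap].[fstop <- None]].
set alP := al2.[a2 <- [fmap].[fstop <- None]].
exists sg1, alP; split.
  have E1' : exec ([seq mdi (create f) | f <- fs] ++ [seq mdi (create m) | m <- ms] ++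
      [seq mdi (create (sj j)) | j <- iota 1 (k + 2)]) (@t_init d Spot Field PAtom) =
      Some (MDState sg1 al1).
    by rewrite -E1 /xs /sjs !map_cat -map_comp.
  rewrite /pgldmd catA catA exec_cat -catA E1' exec_cat ER /=.
  rewrite (@addfield_step _ _ Foci Meth _ _ proatom atomno _ _ _ a1) // ?Fa1 //=.
  rewrite (@addfield_step _ _ Foci Meth _ _ proatom atomno _ _ _ a2) // ?fnd_set (negbTE a21) ?Fa2 //=.
split; first by move=> x /Hin' [b [? _]]; exists b.
split; first exact: Hinj'.
move=> j Hj; have [a [Ea Fa]] := HR j Hj.
case: (leqP j k) => jk.
  rewrite jk in Fa; case: Fa => fl [Efl Hfl]; exists a, fl; split=> //; split=> //.
  have aN1 : a != a1.
    apply/eqP => E; suff : j = k.+1 by clia.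
    by apply: Hsinj; [clia|clia|rewrite Ea Ea1 E].
  have aN2 : a != a2.
    apply/eqP => E; suff : j = k.+2 by clia.
    by apply: Hsinj; [clia|clia|rewrite Ea Ea2 E].
  by rewrite /alP /al2 !fnd_set (negbTE aN1) (negbTE aN2).
rewrite leqNgt jk /= in Fa.
exists a, [fmap].[fstop <- None]; split=> //; split.
  have [Ej|jn] := eqVneq j k.+2.
    by subst j; move: Ea; rewrite Ea2 => -[<-]; rewrite /alP fnd_set eqxx.
  have jk1 : j = k.+1 by clia.
  subst j; move: Ea; rewrite Ea1 => -[<-].
  have a12 : (a1 == a2) = false by rewrite eq_sym (negbTE a21).
  by rewrite /alP /al2 !fnd_set a12 eqxx.
move=> w; rewrite /spec (_ : (j <= k) = false) ?fnd_set ?fnd_fmap0 //; clia.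
Qed.

Local Notation IX := (interp fstop fajmp ffocus fmethod fpos fneg s u v).
Local Notation IT := (pga_T IX).

Lemma instrI r c : 0 < r <= 13 -> instr_at IX (r + 13 * c) = onth (interp_body fstop fajmp ffocus fmethod fpos fneg s u v) r.-1.
Proof. move=> H; exact: (@instr_omega _ (interp_body fstop fajmp ffocus fmethod fpos fneg s u v) r c H). Qed.

Lemma IT1 c : IT (1 + 13 * c) = TPost (IT (2 + 13 * c)) (MD (hasfield s fstop)) (IT (3 + 13 * c)).
Proof. by rewrite (pga_T_pos (a := MD (hasfield s fstop))) // instrI. Qed.
Lemma IT2 c : IT (2 + 13 * c) = TS.
Proof. by rewrite pga_T_term // instrI. Qed.
Lemma IT3 c : IT (3 + 13 * c) = TPost (IT (4 + 13 * c)) (MD (hasfield s fajmp)) (IT (5 + 13 * c)).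
Proof. by rewrite (pga_T_pos (a := MD (hasfield s fajmp))) // instrI. Qed.
Lemma IT4 c : IT (4 + 13 * c) = IT (13 + 13 * c).
Proof. rewrite (pga_T_jump (l := 9)) ?instrI //; congr pga_T; clia. Qed.
Lemma IT5 c : IT (5 + 13 * c) = TPost (IT (6 + 13 * c)) (MD (getfield u s ffocus)) (IT (6 + 13 * c)).
Proof. by rewrite (pga_T_bas (a := MD (getfield u s ffocus))) // instrI. Qed.
Lemma IT6 c : IT (6 + 13 * c) = TPost (IT (7 + 13 * c)) (MD (getfield v s fmethod)) (IT (7 + 13 * c)).
Proof. by rewrite (pga_T_bas (a := MD (getfield v s fmethod))) // instrI. Qed.
Lemma IT7 c : IT (7 + 13 * c) = TPost (IT (8 + 13 * c)) (MD (genact u v)) (IT (9 + 13 * c)).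
Proof. by rewrite (pga_T_pos (a := MD (genact u v))) // instrI. Qed.
Lemma IT8 c : IT (8 + 13 * c) = IT (11 + 13 * c).
Proof. rewrite (pga_T_jump (l := 3)) ?instrI //; congr pga_T; clia. Qed.
Lemma IT9 c : IT (9 + 13 * c) = TPost (IT (10 + 13 * c)) (MD (getfield s s fneg)) (IT (10 + 13 * c)).
Proof. by rewrite (pga_T_bas (a := MD (getfield s s fneg))) // instrI. Qed.
Lemma IT10 c : IT (10 + 13 * c) = IT (1 + 13 * c.+1).
Proof. rewrite (pga_T_jump (l := 4)) ?instrI //; congr pga_T; clia. Qed.
Lemma IT11 c : IT (11 + 13 * c) = TPost (IT (12 + 13 * c)) (MD (getfield s s fpos)) (IT (12 + 13 * c)).
Proof. by rewrite (pga_T_bas (a := MD (getfield s s fpos))) // instrI. Qed.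
Lemma IT12 c : IT (12 + 13 * c) = IT (1 + 13 * c.+1).
Proof. rewrite (pga_T_jump (l := 2)) ?instrI //; congr pga_T; clia. Qed.
Lemma IT13 c : IT (13 + 13 * c) = TPost (IT (1 + 13 * c.+1)) (MD (getfield s s fajmp)) (IT (1 + 13 * c.+1)).
Proof.
rewrite (pga_T_bas (a := MD (getfield s s fajmp))) ?instrI //.
by have -> : (13 + 13 * c).+1 = 1 + 13 * c.+1 by clia.
Qed.

Local Notation useM := (@use d Spot Field PAtom Foci Meth proatom atomno).
Local Notation md_stepM := (@md_step d Spot Field PAtom Foci Meth proatom atomno).

Lemma suv_neq : [/\ s != u, s != v & u != v].
Proof. by move: Hsu; rewrite /= !inE !negb_or => /andP [/and3P [? ? _] /andP [/andP [? _] _]]. Qed.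

Lemma suv_out x : x \in Foci \/ x \in Meth -> [/\ x != s, x != u & x != v].
Proof.
move=> H; have Hs := Hsn (x := s); have Hu := Hsn (x := u); have Hv := Hsn (x := v).
rewrite !inE !eqxx ?orbT in Hs Hu Hv.
have /andP [Hs1 Hs2] := Hs isT; have /andP [Hu1 Hu2] := Hu isT; have /andP [Hv1 Hv2] := Hv isT.
by case: H => H; split; apply/eqP => E; subst x; rewrite H in Hs1 Hs2 Hu1 Hu2 Hv1 Hv2.
Qed.

Section Interp.
Variables (sg1 : Spot -> option PAtom) (alP : {fmap PAtom -> {fmap Field -> option PAtom}}).
Hypothesis Hx : forall x, x \in xs -> exists b, sg1 x = Some b.
Hypothesis Hxi : forall x y, x \in xs -> sg1 y = sg1 x -> y = x.
Hypothesis Hsp : forall j, 0 < j <= K -> exists a fl, sg1 (sj j) = Some a /\ alP.[? a] = Some fl /\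
        forall w, fl.[? w] = spec sg1 j w.

Definition Gd j (st : @mstate d Spot Field PAtom) := exists sg, st = Some (MDState sg alP) /\
  sg s = sg1 (sj j) /\ forall x, x != s -> x != u -> x != v -> sg x = sg1 x.

Lemma has_step sg j w : 0 < j <= K -> sg s = sg1 (sj j) ->
  md_stepM (hasfield s w) (Some (MDState sg alP)) =
  (Some (MDState sg alP), if spec sg1 j w is Some _ then YT else YF).
Proof.
move=> Hj Es; have [a [fl [Ea [Efl Hfl]]]] := Hsp Hj.
rewrite /= /is_field /fields_of /= Es Ea Efl /= -fndSome Hfl; by case: spec.
Qed.

Lemma get_step sg j x w c : 0 < j <= K -> sg s = sg1 (sj j) -> spec sg1 j w = Some c ->
  md_stepM (getfield x s w) (Some (MDState sg alP)) = (Some (MDState (upd_sigma sg x c) alP), YT).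
Proof.
move=> Hj Es Ec; have [a [fl [Ea [Efl Hfl]]]] := Hsp Hj.
by rewrite /= /fields_of /= Es Ea Efl /= Hfl Ec.
Qed.

Lemma genact_step sg f m : sg u = sg1 f -> sg v = sg1 m ->
  (forall x, x != s -> x != u -> x != v -> sg x = sg1 x) ->
  f \in fs -> m \in ms -> f \in Foci -> m \in Meth ->
  md_stepM (genact u v) (Some (MDState sg alP)) = (Some (MDState sg alP), YM f m).
Proof.
move=> Eu Ev Eo fF mM fFo mMe.
have fX : f \in xs by rewrite /xs mem_cat fF.
have mX : m \in xs by rewrite /xs !mem_cat mM orbT.
have [bf Ebf] := Hx fX; have [bm Ebm] := Hx mX.
have Hf : forall g, g \in Foci -> sg g = sg u -> g = f.
  move=> g gF; have [? ? ?] := suv_out (or_introl gF).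
  by rewrite Eo // Eu => /(Hxi fX).
have Hm : forall g, g \in Meth -> sg g = sg v -> g = m.
  move=> g gM; have [? ? ?] := suv_out (or_intror gM).
  by rewrite Eo // Ev => /(Hxi mX).
have [fs1 fu fv] := suv_out (or_introl fFo).
have [ms1 mu mv] := suv_out (or_intror mMe).
rewrite /= Eu Ev Ebf Ebm /=.
case: pickP => [f' /and3P [F1 /eqP F2 _]|N].
  rewrite -Ebf -Eu in F2; rewrite (Hf f' F1 F2).
  case: pickP => [m' /and3P [M1 /eqP M2 _]|N].
    by rewrite -Ebm -Ev in M2; rewrite (Hm m' M1 M2).
  have := N m; rewrite mMe (Eo m) // Ebm eqxx /=.
  move/negP; case; apply/forallP => g; apply/implyP => /andP [gM /eqP E].
  by rewrite -Ebm -Ev in E; rewrite (Hm g gM E) Order.POrderTheory.lexx.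
have := N f; rewrite fFo (Eo f) // Ebf eqxx /=.
move/negP; case; apply/forallP => g; apply/implyP => /andP [gF /eqP E].
by rewrite -Ebf -Eu in E; rewrite (Hf g gF E) Order.POrderTheory.lexx.
Qed.

Lemma run_stop j st c : 0 < j <= K -> Gd j st -> spec sg1 j fstop <> None ->
  useM (IT (1 + 13 * c)) st = TTau TS.
Proof.
move=> Hj [sg [-> [Es Eo]]] Hst.
rewrite IT1 use_md (has_step _ Hj Es); case: spec Hst => // _ _.
by rewrite IT2 use_S.
Qed.

Lemma run_jump j l st c : 0 < j <= K -> Gd j st -> spec sg1 j fstop = None ->
  spec sg1 j fajmp = Some (sg1 (sj l)) ->
  exists st', Gd l st' /\ useM (IT (1 + 13 * c)) st = TTau (TTau (TTau (useM (IT (1 + 13 * c.+1)) st'))).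
Proof.
move=> Hj [sg [-> [Es Eo]]] Hst Haj.
rewrite IT1 use_md (has_step _ Hj Es) Hst.
rewrite IT3 use_md (has_step _ Hj Es) Haj.
rewrite IT4 IT13 use_md (get_step _ Hj Es Haj).
eexists; split; last reflexivity.
exists (upd_sigma sg s (sg1 (sj l))); split=> //; split; first by rewrite /upd_sigma eqxx.
by move=> x xs xu xv; rewrite /upd_sigma (negbTE xs) Eo.
Qed.

Lemma run_bas j st c f m p q : 0 < j <= K -> Gd j st -> spec sg1 j fstop = None ->
  spec sg1 j fajmp = None -> spec sg1 j ffocus = Some (sg1 f) -> spec sg1 j fmethod = Some (sg1 m) ->
  spec sg1 j fpos = Some (sg1 (sj p)) -> spec sg1 j fneg = Some (sg1 (sj q)) ->
  f \in fs -> m \in ms -> f \in Foci -> m \in Meth ->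
  exists stp stq, Gd p stp /\ Gd q stq /\ useM (IT (1 + 13 * c)) st =
   TTau (TTau (TTau (TTau (TPost (TTau (useM (IT (1 + 13 * c.+1)) stp)) (Bas f m)
      (TTau (useM (IT (1 + 13 * c.+1)) stq)))))).
Proof.
move=> Hj [sg [-> [Es Eo]]] Hst Haj Hfo Hme Hpo Hne fF mM fFo mMe.
have [su sv uv] := suv_neq.
rewrite IT1 use_md (has_step _ Hj Es) Hst.
rewrite IT3 use_md (has_step _ Hj Es) Haj.
rewrite IT5 use_md (get_step _ Hj Es Hfo).
set sg2 := upd_sigma sg u (sg1 f).
have Es2 : sg2 s = sg1 (sj j) by rewrite /sg2 /upd_sigma (negbTE su).
rewrite IT6 use_md (get_step _ Hj Es2 Hme).
set sg3 := upd_sigma sg2 v (sg1 m).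
have Es3 : sg3 s = sg1 (sj j) by rewrite /sg3 /upd_sigma (negbTE sv).
have Eo3 : forall x, x != s -> x != u -> x != v -> sg3 x = sg1 x.
  by move=> x xs xu xv; rewrite /sg3 /sg2 /upd_sigma (negbTE xu) (negbTE xv) Eo.
rewrite IT7 use_md (@genact_step sg3 f m) //; first last.
- by rewrite /sg3 /upd_sigma eqxx.
- by rewrite /sg3 /sg2 /upd_sigma (negbTE uv) eqxx.
rewrite IT8 IT11 use_md (get_step _ Hj Es3 Hpo) IT12.
rewrite IT9 use_md (get_step _ Hj Es3 Hne) IT10.
have G : forall r, Gd r (Some (MDState (upd_sigma sg3 s (sg1 (sj r))) alP)).
  move=> r; eexists; split; first reflexivity; split; first by rewrite /upd_sigma eqxx.
  by move=> x xs xu xv; rewrite /upd_sigma (negbTE xs) Eo3.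
by do 2 eexists; split; [exact: G|split; [exact: G|reflexivity]].
Qed.


Definition QL := [seq @psi d Spot Field k j.+1 (nth (LAJump 0) P j) | j <- iota 0 k] ++ [:: ITerm; ITerm].
Local Notation QX := (omega QL).

Lemma instrQ j c : 0 < j <= K ->
  instr_at QX (j + K * c) = Some (if j <= k then @psi d Spot Field k j (nth (LAJump 0) P j.-1) else ITerm).
Proof.
move=> Hj.
have sz : size QL = K by rewrite /QL size_cat size_map size_iota.
have := @instr_omega _ QL j c; rewrite sz => -> //.
rewrite /QL onth_cat size_map size_iota.
case: (leqP j k) => jk.
  have -> : j.-1 < k by clia.
  rewrite onthE -map_comp (nth_map 0) ?size_iota; last by clia.
  rewrite nth_iota; last by clia.
  by rewrite /= add0n prednK //; clia.
have -> : j.-1 < k = false by clia.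
by have [->|->] : j.-1 - k = 0 \/ j.-1 - k = 1 by clia.
Qed.

Definition Jf j := if j <= k then (if nth (LAJump 0) P j.-1 is LAJump l then
   (if (0 < l) && (l <= k) then l else j) else j) else j.
Definition proper j := (j <= k) && (if nth (LAJump 0) P j.-1 is LAJump l then (0 < l) && (l <= k) else false).

Lemma Jf_range j : 0 < j <= K -> 0 < Jf j <= K.
Proof.
rewrite /Jf; case: ifP => // jk; case: nth => // l.
case: ifP => //; clia.
Qed.

Lemma psi_proper j : 0 < j -> proper j -> exists x, @psi d Spot Field k j (nth (LAJump 0) P j.-1) = IJump x /\
  (x = 0 -> Jf j = j) /\ (0 < x -> forall c, exists c', j + K * c + x = Jf j + K * c').
Proof.
move=> j0; rewrite /proper /Jf; case/andP=> jk; rewrite jk.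
case: nth => // l /andP [l0 lk]; rewrite l0 lk /=.
have -> : (l == 0) || (k < l) = false by clia.
case: (leqP j l) => jl.
  exists (l - j); split=> //; split; first by clia.
  by move=> _ c; exists c; clia.
exists (k + 2 - (j - l)); split=> //; split; first by clia.
by move=> _ c; exists c.+1; clia.
Qed.

Lemma jiterQ N c j : 0 < j <= K -> (forall m, proper (iter m Jf j)) ->
  exists c', jiter QX N (j + K * c) = iter N Jf j + K * c'.
Proof.
elim: N c j => [|N IH] c j Hj Hp /=; first by exists c.
have Pj := Hp 0; have [x [Ex [Ex0 Exp]]] := psi_proper (j:=j) ltac:(clia) Pj.
have jk : j <= k by case/andP: Pj.
rewrite /jnext instrQ // jk Ex.
case: (posnP x) => [x0|xp].
  have Jj : Jf j = j by apply: Ex0.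
  have Hfix : iter N Jf j = j by elim: N {IH} => //= n ->.
  by rewrite /= Hfix Jj; exists c.
rewrite -iterS iterSr; have [c1 E1] := Exp xp c; rewrite E1.
have [c'' E''] := IH c1 (Jf j) (Jf_range Hj) (fun m => eq_ind _ (fun z => is_true (proper z)) (Hp m.+1) _ (iterSr m Jf j)).
by exists c''; rewrite E''.
Qed.

Lemma lhs_inf j c : 0 < j <= K -> (forall m, proper (iter m Jf j)) -> pga_T QX (j + K * c) = TD.
Proof.
move=> Hj Hp; rewrite pga_T_unfold; case E: chain_end => [e|] //.
have [N [EN _]] := chain_end_some E.
have [c' Ec'] := jiterQ N c Hj Hp.
have HjN : 0 < iter N Jf j <= K by elim: N {EN Ec'} => //= N IHN; exact: Jf_range.
have PN := Hp N.
have [x [Ex _]] := psi_proper (j := iter N Jf j) ltac:(clia) PN.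
have jk : iter N Jf j <= k by case/andP: PN.
by rewrite -EN Ec' instrQ // jk Ex.
Qed.


Lemma spec_jump j : proper j -> spec sg1 j fstop = None /\ spec sg1 j fajmp = Some (sg1 (sj (Jf j))).
Proof.
have N := neqs_of Hfu.
rewrite /proper /spec /Jf; case/andP => jk; rewrite jk; case: nth => // l H.
by rewrite H N eqxx.
Qed.

Lemma rhs_inf N j c st : 0 < j <= K -> (forall m, proper (iter m Jf j)) -> Gd j st ->
  is_tau (tau_strip N (useM (IT (1 + 13 * c)) st)).
Proof.
elim: N {-2}N (leqnn N) j c st => [|N IHN] N' HN' j c st Hj Hp G.
  have [sf sa] := spec_jump (Hp 0).
  have [st' [G' ->]] := run_jump c Hj G sf sa.
  by have -> : N' = 0 by clia.
have [sf sa] := spec_jump (Hp 0).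
have [st' [G' ->]] := run_jump c Hj G sf sa.
case: N' HN' => [|[|[|N'']]] HN' //=.
apply: (IHN N'' _ (Jf j) c.+1 st'); [clia | exact: Jf_range | | exact: G'].
by move=> m; rewrite -iterSr.
Qed.

Lemma mainQ n j c' c st : 0 < j <= K -> Gd j st ->
  proj n (pga_T QX (j + K * c')) = proj n (tau_tau (useM (IT (1 + 13 * c)) st)).
Proof.
have N := neqs_of Hfu.
elim: n j c' c st => [|n IH] //.
have NP : forall j c' c st, 0 < j <= K -> ~~ proper j -> Gd j st ->
  proj n.+1 (pga_T QX (j + K * c')) = proj n.+1 (tau_tau (useM (IT (1 + 13 * c)) st)).
  move=> j c' c st Hj Pj G.
  case: (leqP j k) => jk; last first.
    rewrite pga_T_term; last by rewrite instrQ // (_ : (j <= k) = false) //; clia.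
    rewrite (run_stop c Hj G); first by rewrite tau_tau_tau tau_tau_S.
    by rewrite /spec (_ : (j <= k) = false) ?eqxx //; clia.
  have ik : j.-1 < k by clia.
  case E: (nth (LAJump 0) P j.-1) => [f m|f m|f m|l].
  - have [fF mM fFo mMe] := @fm_in _ f m ik ltac:(by rewrite E).
    have Sp : forall w, spec sg1 j w = rfl ffocus fmethod fpos fneg sg1 f m (sj j.+1) (sj j.+1) w.
      by move=> w; rewrite /spec jk E.
    have S1 : spec sg1 j fstop = None by rewrite Sp /rfl !N.
    have S2 : spec sg1 j fajmp = None by rewrite Sp /rfl !N.
    have S3 : spec sg1 j ffocus = Some (sg1 f) by rewrite Sp /rfl !N eqxx.
    have S4 : spec sg1 j fmethod = Some (sg1 m) by rewrite Sp /rfl !N eqxx.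
    have S5 := Sp fpos; rewrite /rfl !N eqxx in S5.
    have S6 := Sp fneg; rewrite /rfl !N eqxx in S6.
    have [stp [stq [Gp [Gq ->]]]] := run_bas (p := j.+1) (q := j.+1) c Hj G
      S1 S2 S3 S4 S5 S6 fF mM fFo mMe.
    rewrite !tau_tau_tau tau_tau_post !tau_tau_tau.
    rewrite (pga_T_bas (a := Bas f m)); last by rewrite instrQ // jk /= E.
    rewrite /= -?[(j + K * c').+2]/(j.+2 + K * c') -?[(j + K * c').+1]/(j.+1 + K * c'); congr FPost.
    + exact: (IH j.+1 c' c.+1 stp ltac:(clia) Gp).
    + exact: (IH j.+1 c' c.+1 stq ltac:(clia) Gq).
  - have [fF mM fFo mMe] := @fm_in _ f m ik ltac:(by rewrite E).
    have Sp : forall w, spec sg1 j w = rfl ffocus fmethod fpos fneg sg1 f m (sj j.+1) (sj j.+2) w.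
      by move=> w; rewrite /spec jk E.
    have S1 : spec sg1 j fstop = None by rewrite Sp /rfl !N.
    have S2 : spec sg1 j fajmp = None by rewrite Sp /rfl !N.
    have S3 : spec sg1 j ffocus = Some (sg1 f) by rewrite Sp /rfl !N eqxx.
    have S4 : spec sg1 j fmethod = Some (sg1 m) by rewrite Sp /rfl !N eqxx.
    have S5 := Sp fpos; rewrite /rfl !N eqxx in S5.
    have S6 := Sp fneg; rewrite /rfl !N eqxx in S6.
    have [stp [stq [Gp [Gq ->]]]] := run_bas (p := j.+1) (q := j.+2) c Hj G
      S1 S2 S3 S4 S5 S6 fF mM fFo mMe.
    rewrite !tau_tau_tau tau_tau_post !tau_tau_tau.
    rewrite (pga_T_pos (a := Bas f m)); last by rewrite instrQ // jk /= E.
    rewrite /= -?[(j + K * c').+2]/(j.+2 + K * c') -?[(j + K * c').+1]/(j.+1 + K * c'); congr FPost.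
    + exact: (IH j.+1 c' c.+1 stp ltac:(clia) Gp).
    + exact: (IH j.+2 c' c.+1 stq ltac:(clia) Gq).
  - have [fF mM fFo mMe] := @fm_in _ f m ik ltac:(by rewrite E).
    have Sp : forall w, spec sg1 j w = rfl ffocus fmethod fpos fneg sg1 f m (sj j.+2) (sj j.+1) w.
      by move=> w; rewrite /spec jk E.
    have S1 : spec sg1 j fstop = None by rewrite Sp /rfl !N.
    have S2 : spec sg1 j fajmp = None by rewrite Sp /rfl !N.
    have S3 : spec sg1 j ffocus = Some (sg1 f) by rewrite Sp /rfl !N eqxx.
    have S4 : spec sg1 j fmethod = Some (sg1 m) by rewrite Sp /rfl !N eqxx.
    have S5 := Sp fpos; rewrite /rfl !N eqxx in S5.
    have S6 := Sp fneg; rewrite /rfl !N eqxx in S6.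
    have [stp [stq [Gp [Gq ->]]]] := run_bas (p := j.+2) (q := j.+1) c Hj G
      S1 S2 S3 S4 S5 S6 fF mM fFo mMe.
    rewrite !tau_tau_tau tau_tau_post !tau_tau_tau.
    rewrite (pga_T_neg (a := Bas f m)); last by rewrite instrQ // jk /= E.
    rewrite /= -?[(j + K * c').+2]/(j.+2 + K * c') -?[(j + K * c').+1]/(j.+1 + K * c'); congr FPost.
    + exact: (IH j.+2 c' c.+1 stp ltac:(clia) Gp).
    + exact: (IH j.+1 c' c.+1 stq ltac:(clia) Gq).
  - have Pl : ~~ ((0 < l) && (l <= k)) by move: Pj; rewrite /proper jk E.
    rewrite pga_T_term; last first.
      rewrite instrQ // jk E /=.
      by have -> : (l == 0) || (k < l) by clia.
    rewrite (run_stop c Hj G); first by rewrite tau_tau_tau tau_tau_S.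
    by rewrite /spec jk E (negbTE Pl) eqxx.
have JP : forall j c' c st, 0 < j <= K -> proper j -> Jf j != j ->
  (forall c' c st, Gd (Jf j) st ->
     proj n.+1 (pga_T QX (Jf j + K * c')) = proj n.+1 (tau_tau (useM (IT (1 + 13 * c)) st))) ->
  Gd j st ->
  proj n.+1 (pga_T QX (j + K * c')) = proj n.+1 (tau_tau (useM (IT (1 + 13 * c)) st)).
  move=> j c' c st Hj Pj Jj H G.
  have [sf sa] := spec_jump Pj.
  have [st' [G' ->]] := run_jump c Hj G sf sa.
  rewrite !tau_tau_tau.
  have [x [Ex [Ex0 Exp]]] := psi_proper (j := j) ltac:(clia) Pj.
  have xp : 0 < x.
    case: (posnP x) => // x0; by rewrite (Ex0 x0) eqxx in Jj.
  have jk : j <= k by case/andP: Pj.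
  have [c1 E1] := Exp xp c'.
  rewrite (pga_T_jump (l := x)) //; last by rewrite instrQ // jk Ex.
  rewrite E1; exact: H.
have INF : forall j c' c st, 0 < j <= K -> (forall m, proper (iter m Jf j)) -> Gd j st ->
  proj n.+1 (pga_T QX (j + K * c')) = proj n.+1 (tau_tau (useM (IT (1 + 13 * c)) st)).
  move=> j c' c st Hj Hp G.
  rewrite lhs_inf // tau_tau_inf //; move=> N'; exact: (rhs_inf N' c Hj Hp G).
move=> j c' c st Hj G.
case: (classic (exists m, ~~ proper (iter m Jf j))) => [[m Hm]|Hn]; last first.
  apply: INF => // m; case: (boolP (proper (iter m Jf j))) => // H.
  by exfalso; apply: Hn; exists m.
elim: m j Hj Hm c' c st G => [|m IHm] j Hj Hm c' c st G.
  exact: NP.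
case: (boolP (proper j)) => Pj; last exact: NP.
case: (eqVneq (Jf j) j) => Jj.
  by apply: IHm => //; rewrite iterSr Jj in Hm.
apply: JP => // c1 c2 st' G'.
apply: IHm => //; first exact: Jf_range.
by rewrite -iterSr.
Qed.

End Interp.
Lemma final : thr_eq (pgld_beh P)
    (tau_tau (useM (pga_beh IX) (exec (pgldmd fstop fajmp ffocus fmethod fpos fneg s sj fs ms P)
                     (@t_init d Spot Field PAtom)))).
Proof.
have [sg1 [alP [E [Hx [Hxi Hsp]]]]] := setup.
rewrite E => n.
have G : Gd sg1 alP 1 (Some (MDState (upd_sigma sg1 s (sg1 (sj 1))) alP)).
  exists (upd_sigma sg1 s (sg1 (sj 1))); split=> //; split; first by rewrite /upd_sigma eqxx.
  by move=> x xs _ _; rewrite /upd_sigma (negbTE xs).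
have := mainQ Hx Hxi Hsp n 0 0 (j := 1) ltac:(clia) G.
by rewrite muln0 addn0.
Qed.

End Main.

Theorem theorem1
  (d : Order.disp_t) (Spot : finOrderType d) (Foci Meth : {set Spot})
  (Field : finType) (fstop fajmp ffocus fmethod fpos fneg : Field)
  (PAtom : choiceType) (proatom : nat -> PAtom) (atomno : PAtom -> nat)
  (s u v : Spot) (sj : nat -> Spot)
  (P : seq (@pgld_instr d Spot)) (fs ms : seq Spot) :
  [disjoint Foci & Meth] ->
  uniq [:: fstop; fajmp; ffocus; fmethod; fpos; fneg] ->
  (* proatom is a bijection from N_{>=1} onto PAtom, with inverse atomno *)
  (forall n, 0 < n -> atomno (proatom n) = n) ->
  (forall a, 0 < atomno a /\ proatom (atomno a) = a) ->
  (* k >= 1 *)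
  0 < size P ->
  (* basic instructions of P are f.m with f a focus and m a method *)
  all (fun w => if instr_fm w is Some (f, m) then (f \in Foci) && (m \in Meth) else true) P ->
  (* s, u, v, s_1, ..., s_(k+2) pairwise distinct spots, outside Foci and Meth *)
  uniq (s :: u :: v :: [seq sj j | j <- iota 1 (size P + 2)]) ->
  (forall x, x \in s :: u :: v :: [seq sj j | j <- iota 1 (size P + 2)] ->
     (x \notin Foci) && (x \notin Meth)) ->
  (* fs, ms: the distinct occurring foci / methods of P *)
  uniq fs -> fs =i occ_foci P ->
  uniq ms -> ms =i occ_meths P ->
  thr_eq (pgld_beh P)
    (tau_tau (use Foci Meth proatom atomno
                  (pga_beh (interp fstop fajmp ffocus fmethod fpos fneg s u v))
                  (exec_md Foci Meth proatom atomno
                     (pgldmd fstop fajmp ffocus fmethod fpos fneg s sj fs ms P)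
                     (@t_init d Spot Field PAtom)))).
Proof.
move=> H1 H2 H3 _ H5 H6 H7 H8 H9 H10 H11 H12.
exact: final.
Qed.
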